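(* Let $G=(V,E)$ be a connected graph on $n\geq 4$ vertices with $V=\{p_1,\ldots,p_{n-1},q\}$, where $p_1-p_2-\cdots-p_{n-1}$ is a path in $G$, and let $N(q)=\{p_{i_1},\ldots,p_{i_t}\}$. If $\psi_{n-1}(G)=2$ and $\psi_n(G)=0$, then: (1) $d(p_1)\geq 2$ and $d(p_{n-1})\geq 2$; (2) $p_1p_{n-1}\notin E$, $qp_1\notin E$, $qp_{n-1}\notin E$, and for all $i\in\{2,\ldots,n-2\}$, if $qp_i\in E$ then $qp_{i+1}\notin E$; (3) $p_1p_{i_j+1}\notin E$ and $p_{n-1}p_{i_j-1}\notin E$ for all $j\in\{1,\ldots,t\}$; (4) $p_1p_{i_j-1}\notin E$ for all $j$ with $i_j>\min\{i_1,\ldots,i_t\}$, and $p_{n-1}p_{i_j+1}\notin E$ for all $j$ with $i_j<\max\{i_1,\ldots,i_t\}$.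
   Context: All graphs are finite and simple. For a graph $G$ and a positive integer $k$, a $k$-path vertex cover ($k$-PVC) of $G$ is a set $S$ of vertices such that every path on $k$ vertices in $G$ contains at least one vertex of $S$ (if $G$ has no path on $k$ vertices, the empty set is a $k$-PVC). $\psi_k(G)$ denotes the minimum cardinality of a $k$-PVC of $G$. $N(v)$ is the neighbourhood and $d(v)$ the degree of a vertex $v$. *)

(* Defs.v *)
From mathcomp Require Import all_boot.
Set Implicit Arguments. Unset Strict Implicit. Unset Printing Implicit Defensive.

Definition simple_graph (T : finType) (e : rel T) : Prop :=
  symmetric e /\ irreflexive e.

Definition connected_graph (T : finType) (e : rel T) : Prop :=
  forall x y : T, connect e x y.

Definition is_kpath (T : finType) (e : rel T) (k : nat) (s : k.-tuple T) : bool :=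
  uniq s && (if tval s is x :: s' then path e x s' else true).

Definition is_kpvc (T : finType) (e : rel T) (k : nat) (S : {set T}) : bool :=
  [forall s : k.-tuple T, is_kpath e s ==> has (mem S) s].

(* psi_k(G): the minimum cardinality of a k-PVC (setT is always one for k >= 1). *)
Definition psi (T : finType) (e : rel T) (k : nat) : nat :=
  \big[minn/#|T|]_(S : {set T} | is_kpvc e k S) #|S|.

Definition deg (T : finType) (e : rel T) (v : T) : nat := #|[set y | e v y]|.

(* Main.v *)
Require Import Defs.
From mathcomp Require Import all_boot zify.

Lemma psi_le (T : finType) (e : rel T) k (S : {set T}) :
  is_kpvc e k S -> psi e k <= #|S|.
Proof.
move=> HS; rewrite /psi.
have : S \in index_enum {set T} by rewrite /index_enum -enumT mem_enum.
elim: (index_enum _) => [//|x r IH]; rewrite big_cons inE.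
case/orP => [/eqP <-|Hr]; first by rewrite HS geq_minl.
case: ifP => _; last exact: IH.
by rewrite geq_min IH ?orbT.
Qed.

Lemma psi0_nokpath (T : finType) (e : rel T) k :
  psi e k = 0 -> 0 < #|T| -> forall t : k.-tuple T, ~~ is_kpath e t.
Proof.
move=> H0 HT t; apply/negP => Ht.
have Hs0 : is_kpvc e k set0.
  apply/negPn/negP => Hn.
  have : 0 < psi e k.
    rewrite /psi; apply: (big_ind (fun x => 0 < x)) => //.
      by move=> x y Hx Hy; rewrite leq_min Hx Hy.
    move=> S HS; rewrite card_gt0; apply/negP => /eqP HS0.
    by move: HS; rewrite HS0 (negbTE Hn).
  by rewrite H0.
move/forallP: Hs0 => /(_ t); rewrite Ht /=.
by move=> /hasP [x _]; rewrite /= in_set0.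
Qed.

Lemma noham (T : finType) (e : rel T) (n : nat) (f : nat -> T) :
  #|T| = n -> 0 < n -> psi e n = 0 ->
  (forall k, k.+1 < n -> e (f k) (f k.+1)) ->
  (forall v, exists2 k, k < n & f k = v) -> False.
Proof.
move=> HT Hn H0 Hadj Hcov.
have Hs : size (mkseq f n) == n by rewrite size_mkseq.
have := @psi0_nokpath _ _ _ H0 _ (Tuple Hs); rewrite HT => /(_ Hn) /negP; apply.
rewrite /is_kpath /=; apply/andP; split.
  apply/card_uniqP; rewrite size_mkseq.
  have -> : #|mkseq f n| = #|T|; last by [].
  rewrite eq_cardT ?cardT //.
  move=> v; move: (Hcov v) => [k Hk <-]; rewrite inE /=.
  by apply/mapP; exists k => //; rewrite mem_iota.
case: n H0 HT Hn Hs Hadj Hcov => // n' H0 HT _ Hs Hadj Hcov.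
have E : mkseq f n'.+1 = f 0 :: behead (mkseq f n'.+1) by [].
change (path e (f 0) (behead (mkseq f n'.+1))).
apply/(pathP (f 0)) => i Hi.
rewrite size_behead size_mkseq /= in Hi.
have -> : nth (f 0) (behead (mkseq f n'.+1)) i = nth (f 0) (mkseq f n'.+1) i.+1 by [].
rewrite -E !nth_mkseq //; first exact: Hadj. by apply: ltnW.
Qed.
Lemma path_nbr (T : eqType) (e : rel T) : symmetric e ->
  forall s x z, path e x s -> 0 < size s -> z \in x :: s ->
  exists2 y, y \in x :: s & e z y.
Proof.
move=> Hsym; elim=> [//|y s IH] x z /= /andP [Hxy Hp] _.
rewrite inE => /orP [/eqP ->|Hz]; first by exists y; [rewrite !inE eqxx orbT | ].
case: s IH Hp Hz => [|y' s'] IH Hp Hz.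
  move: Hz; rewrite inE => /eqP ->; exists x; first by rewrite inE eqxx.
  by rewrite Hsym.
have [w Hw Hzw] := IH y z Hp isT Hz.
by exists w => //; rewrite inE Hw orbT.
Qed.

Lemma pendant (T : finType) (e : rel T) k a b : symmetric e -> #|T| = k.+1 ->
  2 <= k -> a != b -> e a b -> (forall y, e a y -> y = b) -> is_kpvc e k [set b].
Proof.
move=> Hsym HT Hk Hab Heab Hy.
apply/forallP => t; apply/implyP => /andP [Hu Hp].
apply/hasP; exists b; last by rewrite /= inE.
apply/negPn/negP => Hb.
have Ha : a \in tval t.
  apply/negPn/negP => Ha.
  have Hc : #|tval t| <= #|~: [set a; b]|.
    apply: subset_leq_card; apply/subsetP => x Hx.
    rewrite !inE; apply/negP => /orP [/eqP Ex|/eqP Ex].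
      by rewrite -Ex Hx in Ha.
    by rewrite -Ex Hx in Hb.
  move: Hc; rewrite (card_uniqP Hu) size_tuple.
  have := cardsC [set a; b]; rewrite cards2 Hab HT; lia.
move: Hp Ha; case Et: (tval t) => [|x s].
  by move: (size_tuple t); rewrite Et /=; lia.
move=> Hp Ha.
have Hs : 0 < size s by move: (size_tuple t); rewrite Et /=; lia.
have [w Hw Haw] := @path_nbr _ _ Hsym _ _ _ Hp Hs Ha.
by move: Hb; rewrite Et -(Hy _ Haw) Hw.
Qed.

Lemma cong2 {T : Type} {e : rel T} {p : nat -> T} {a b c d} :
  e (p a) (p b) -> c = a -> d = b -> e (p c) (p d).
Proof. by move=> H -> ->. Qed.
Lemma cong2s {T : Type} {e : rel T} {p : nat -> T} {a b c d} : symmetric e ->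
  e (p a) (p b) -> c = b -> d = a -> e (p c) (p d).
Proof. by move=> Hs H -> ->; rewrite Hs. Qed.
Lemma congq1 {T : Type} {e : rel T} {p : nat -> T} {x a c} :
  e x (p a) -> c = a -> e x (p c).
Proof. by move=> H ->. Qed.
Lemma congq2 {T : Type} {e : rel T} {p : nat -> T} {x a c} : symmetric e ->
  e x (p a) -> c = a -> e (p c) x.
Proof. by move=> Hs H ->; rewrite Hs. Qed.

Lemma deg1 (T : finType) (e : rel T) a b : deg e a <= 1 -> e a b ->
  forall y, e a y -> y = b.
Proof.
move=> Hd Hb y Hy; apply/eqP/negPn/negP => Hyb.
have : #|[set b; y]| <= deg e a.
  apply: subset_leq_card; apply/subsetP => x; rewrite !inE.
  by case/orP => /eqP ->.
by rewrite cards2 eq_sym Hyb; move: Hd; lia.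
Qed.

Ltac hs Hfw Hbw Hsym :=
  repeat (case: ifP => ?); try (exfalso; lia);
  first [ match goal with |- is_true (_ (?P ?C) (?P ?D)) =>
            first [ exact (Hfw C D ltac:(lia) ltac:(lia) ltac:(lia))
                  | exact (Hbw C D ltac:(lia) ltac:(lia) ltac:(lia)) ] end
        | match goal with
          | H : is_true (?E ?X (?P ?A)) |- is_true (?E ?X (?P ?C)) =>
              exact (@congq1 _ E P X A C H ltac:(lia))
          | H : is_true (?E ?X (?P ?A)) |- is_true (?E (?P ?C) ?X) =>
              exact (@congq2 _ E P X A C Hsym H ltac:(lia))
          | H : is_true (?E (?P ?A) (?P ?B)) |- is_true (?E (?P ?C) (?P ?D)) =>
              exact (@cong2 _ E P A B C D H ltac:(lia) ltac:(lia))
          | H : is_true (?E (?P ?A) (?P ?B)) |- is_true (?E (?P ?C) (?P ?D)) =>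
              exact (@cong2s _ E P A B C D Hsym H ltac:(lia) ltac:(lia))
          end ].

Ltac hc := repeat (case: ifP => ?); try (exfalso; lia); try done; f_equal; lia.

Theorem mainTheorem11 (T : finType) (e : rel T) (n : nat) (p : nat -> T) (q : T)
  (Hsimple : simple_graph e)
  (Hconn : connected_graph e)
  (Hn : 4 <= n)
  (HcardT : #|T| = n)
  (Hpinj : forall i j, 1 <= i <= n.-1 -> 1 <= j <= n.-1 -> p i = p j -> i = j)
  (Hpq : forall i, 1 <= i <= n.-1 -> p i != q)
  (Hcover : forall v : T, v = q \/ exists2 i, 1 <= i <= n.-1 & v = p i)
  (Hpath : forall i, 1 <= i < n.-1 -> e (p i) (p i.+1))
  (Hpsi1 : psi e n.-1 = 2)
  (Hpsi0 : psi e n = 0) :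
  (* (1) *)
  (2 <= deg e (p 1) /\ 2 <= deg e (p n.-1)) /\
  (* (2) *)
  (~~ e (p 1) (p n.-1) /\ ~~ e q (p 1) /\ ~~ e q (p n.-1) /\
   (forall i, 2 <= i <= n.-2 -> e q (p i) -> ~~ e q (p i.+1))) /\
  (* (3) *)
  (forall i, 1 <= i <= n.-1 -> e q (p i) ->
     ~~ e (p 1) (p i.+1) /\ ~~ e (p n.-1) (p i.-1)) /\
  (* (4) *)
  (forall i, 1 <= i <= n.-1 -> e q (p i) ->
     (exists2 i', (1 <= i' <= n.-1) && (i' < i) & e q (p i')) ->
     ~~ e (p 1) (p i.-1)) /\
  (forall i, 1 <= i <= n.-1 -> e q (p i) ->
     (exists2 i', (1 <= i' <= n.-1) && (i < i') & e q (p i')) ->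
     ~~ e (p n.-1) (p i.+1)).
Proof.
move: Hsimple => [Hsym Hirr].
have Hfw : forall a b, 1 <= a -> b = a.+1 -> b <= n.-1 -> e (p a) (p b).
  by move=> a b H1 -> H2; apply: Hpath; lia.
have Hbw : forall a b, 1 <= b -> a = b.+1 -> a <= n.-1 -> e (p a) (p b).
  by move=> a b H1 -> H2; rewrite Hsym; apply: Hpath; lia.
have Ham : forall f : nat -> T, (forall k, k.+1 < n -> e (f k) (f k.+1)) ->
    (forall j, 1 <= j <= n.-1 -> exists2 k, k < n & f k = p j) ->
    (exists2 k, k < n & f k = q) -> False.
  move=> f Ha Hc Hq; apply: (@noham _ _ _ f HcardT _ Hpsi0 Ha); first lia.
  by move=> v; case: (Hcover v) => [->|[j Hj ->]]; [ | apply: Hc].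
have Hq1 : ~~ e q (p 1).
  apply/negP => Hq.
  apply: (Ham (fun k => if k < 1 then q else p k)).
  - move=> k Hk /=; hs Hfw Hbw Hsym.
  - by move=> j Hj; exists j; [lia | hc].
  - by exists 0 => //; lia.
have Hqm : ~~ e q (p n.-1).
  apply/negP => Hq.
  apply: (Ham (fun k => if k < n.-1 then p k.+1 else q)).
  - move=> k Hk /=; hs Hfw Hbw Hsym.
  - by move=> j Hj; exists j.-1; [lia | hc].
  - by exists n.-1; [lia | hc].
have Hcons : forall i, 2 <= i <= n.-2 -> e q (p i) -> ~~ e q (p i.+1).
  move=> i Hi Hqi; apply/negP => Hq.
  apply: (Ham (fun k => if k < i then p k.+1 else if k < i.+1 then q else p k)).
  - move=> k Hk /=; hs Hfw Hbw Hsym.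
  - move=> j Hj; case: (leqP j i) => ?.
      by exists j.-1; [lia | hc].
    by exists j; [lia | hc].
  - by exists i; [lia | hc].
have [i0 Hi0 Hqi0] : exists2 i, 1 <= i <= n.-1 & e q (p i).
  case/connectP: (Hconn q (p 1)) => [[|y s] Hs Hl].
    by move: (Hpq 1 ltac:(lia)); rewrite Hl eqxx.
  move: Hs => /= /andP [Hqy _].
  case: (Hcover y) => [Ey|[i Hi Ey]].
    by move: Hqy; rewrite Ey Hirr.
  by exists i => //; rewrite -Ey.
have H1m : ~~ e (p 1) (p n.-1).
  apply/negP => H.
  apply: (Ham (fun k => if k < 1 then q else if k < n.-1 - i0 + 2 then p (i0 + k - 1)
                        else p (k - (n.-1 - i0 + 1)))).
  - move=> k Hk /=; hs Hfw Hbw Hsym.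
  - move=> j Hj; case: (leqP i0 j) => ?.
      by exists (j - i0 + 1); [lia | hc].
    by exists (j + n.-1 - i0 + 1); [lia | hc].
  - by exists 0; [lia | hc].
have Hdeg : forall a b, 1 <= a <= n.-1 -> 1 <= b <= n.-1 -> a != b -> e (p a) (p b) ->
    2 <= deg e (p a).
  move=> a b Ha Hb Hab H; rewrite leqNgt; apply/negP => Hd.
  have Hy := @deg1 _ _ _ _ Hd H.
  have Hab' : p a != p b.
    apply/eqP => E; have := Hpinj a b Ha Hb E; move/eqP: Hab; lia.
  have Hpv := @pendant _ _ n.-1 (p a) (p b) Hsym ltac:(rewrite HcardT; lia) ltac:(lia) Hab' H Hy.
  by have := @psi_le _ _ _ _ Hpv; rewrite cards1 Hpsi1.
split.
  split; first by apply: (Hdeg 1 2); [lia | lia | by [] | apply: Hfw; lia].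
  by apply: (Hdeg n.-1 n.-2); [lia | lia | apply/eqP; lia | apply: Hbw; lia].
split; first by split; [ | split; [ | split]].
split.
  move=> i Hi Hqi.
  have Hi1 : i != 1 by apply/eqP => E; move: Hq1; rewrite -E Hqi.
  have Him : i != n.-1 by apply/eqP => E; move: Hqm; rewrite -E Hqi.
  split; apply/negP => H.
    apply: (Ham (fun k => if k < 1 then q else if k < i.+1 then p (i.+1 - k) else p k)).
    - move=> k Hk /=; hs Hfw Hbw Hsym.
    - move=> j Hj; case: (leqP j i) => ?.
        by exists (i.+1 - j); [lia | hc].
      by exists j; [lia | hc].
    - by exists 0; [lia | hc].
  apply: (Ham (fun k => if k < i.-1 then p k.+1 else if k < n.-1 then p (n.-1 + i - 1 - k) else q)).
  - move=> k Hk /=; hs Hfw Hbw Hsym.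
  - move=> j Hj; case: (ltnP j i) => ?.
      by exists j.-1; [lia | hc].
    by exists (n.-1 + i - 1 - j); [lia | hc].
  - by exists n.-1; [lia | hc].
split.
  move=> i Hi Hqi [i' /andP [Hi' Hlt] Hqi']; apply/negP => H.
  apply: (Ham (fun k => if k < i.-1 - i' then p (i' + 1 + k)
                        else if k < i.-1 then p (k - (i.-1 - i') + 1)
                        else if k < i then q else p k)).
  - move=> k Hk /=; hs Hfw Hbw Hsym.
  - move=> j Hj; case: (ltnP i' j) => ?; last by exists (j - 1 + (i.-1 - i')); [lia | hc].
    case: (ltnP j i) => ?; first by exists (j - i' - 1); [lia | hc].
    by exists j; [lia | hc].
  - by exists i.-1; [lia | hc].
move=> i Hi Hqi [i' /andP [Hi' Hlt] Hqi']; apply/negP => H.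
apply: (Ham (fun k => if k < i then p k.+1 else if k < i.+1 then q
                      else if k < i.+1 + (n.-1 - i' + 1) then p (k - i.+1 + i')
                      else p (k - (n.-1 - i' + 1)))).
- move=> k Hk /=; hs Hfw Hbw Hsym.
- move=> j Hj; case: (leqP j i) => ?; first by exists j.-1; [lia | hc].
  case: (leqP i' j) => ?; first by exists (j - i' + i + 1); [lia | hc].
  by exists (j + n.-1 - i' + 1); [lia | hc].
- by exists i; [lia | hc].
Qed.
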